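(* Under Rayleigh fading, for every target rate $r>0$, $P_{\rm r}>0$ and $\mathcal C_x\in[0,1)$, \[ \mathcal P_{\rm E-E}(P_{\rm r},\mathcal C_x)\le 1-\frac{\exp\!\left(-\left(\frac{\Psi_r(\mathcal C_x)}{P_{\rm r}\pi_{\rm rd}(1-\mathcal C_x^2)}+\frac{P_{\rm r}\pi_{\rm rr}+1}{P_{\rm s}\pi_{\rm sr}}\Psi_r(\alpha\mathcal C_x)\right)\right)}{P_{\rm s}\pi_{\rm sd}\frac{\Psi_r(\mathcal C_x)}{P_{\rm r}\pi_{\rm rd}(1-\mathcal C_x^2)}+1}=:\mathcal P^{\rm UB}_{\rm E-E,RF}(P_{\rm r},\mathcal C_x), \qquad\alpha=\frac{P_{\rm r}\pi_{\rm rr}}{P_{\rm r}\pi_{\rm rr}+1}. \]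
   Context: Let $P_{\rm s}>0$, $P_{\rm r}>0$ be the source and relay transmit powers. Rayleigh fading: $g_{\rm sr},g_{\rm rr},g_{\rm rd},g_{\rm sd}$ are mutually independent exponential random variables with means $\pi_{\rm sr},\pi_{\rm rr},\pi_{\rm rd},\pi_{\rm sd}>0$. For $\mathcal C_x\in[0,1)$ define $R_{\rm sr}(P_{\rm r},\mathcal C_x)=\tfrac12\log_2\frac{(P_{\rm s}g_{\rm sr}+P_{\rm r}g_{\rm rr}+1)^2-(P_{\rm r}g_{\rm rr}\mathcal C_x)^2}{(P_{\rm r}g_{\rm rr}+1)^2-(P_{\rm r}g_{\rm rr}\mathcal C_x)^2}$ and $R_{\rm rd}(P_{\rm r},\mathcal C_x)=\tfrac12\log_2\frac{(P_{\rm r}g_{\rm rd}+P_{\rm s}g_{\rm sd}+1)^2-(P_{\rm r}g_{\rm rd}\mathcal C_x)^2}{(P_{\rm s}g_{\rm sd}+1)^2}$. For a target rate $r>0$ put $\gamma=2^{2r}-1$ and $\Psi_r(x)=\sqrt{1+\gamma(1-x^2)}-1$. The end-to-end outage probability is $\mathcal P_{\rm E-E}=\mathbb P\{\min(R_{\rm sr},R_{\rm rd})<r\}$. *)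

(* Defs.v *)
From Stdlib Require Import Reals.
Open Scope R_scope.

Record prob_space := {
  ps_omega :> Type;
  ps_meas : (ps_omega -> Prop) -> Prop;
  ps_P : (ps_omega -> Prop) -> R;
  ps_meas_full : ps_meas (fun _ => True);
  ps_meas_compl : forall A, ps_meas A -> ps_meas (fun w => ~ A w);
  ps_meas_cunion : forall A : nat -> ps_omega -> Prop,
      (forall n, ps_meas (A n)) -> ps_meas (fun w => exists n, A n w);
  ps_P_nonneg : forall A, ps_meas A -> 0 <= ps_P A;
  ps_P_full : ps_P (fun _ => True) = 1;
  ps_P_sigma_additive : forall A : nat -> ps_omega -> Prop,
      (forall n, ps_meas (A n)) ->
      (forall m n w, m <> n -> A m w -> A n w -> False) ->
      infinite_sum (fun n => ps_P (A n)) (ps_P (fun w => exists n, A n w))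
}.

(* Real random variable: measurable w.r.t. the Borel sets (generated by
   the half-lines (-oo, t]). *)
Definition random_variable (S : prob_space) (X : S -> R) : Prop :=
  forall t, ps_meas S (fun w => X w <= t).

Definition exponential_rv (S : prob_space) (m : R) (X : S -> R) : Prop :=
  random_variable S X /\
  (forall t, t < 0 -> ps_P S (fun w => X w <= t) = 0) /\
  (forall t, 0 <= t -> ps_P S (fun w => X w <= t) = 1 - exp (- t / m)).

Definition mutually_independent4 (S : prob_space) (X1 X2 X3 X4 : S -> R) : Prop :=
  forall t1 t2 t3 t4,
    ps_P S (fun w => X1 w <= t1 /\ X2 w <= t2 /\ X3 w <= t3 /\ X4 w <= t4) =
    ps_P S (fun w => X1 w <= t1) * ps_P S (fun w => X2 w <= t2) *
    ps_P S (fun w => X3 w <= t3) * ps_P S (fun w => X4 w <= t4).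

Definition log2 (x : R) : R := ln x / ln 2.

Definition R_sr (Ps Pr Cx gsr grr : R) : R :=
  / 2 * log2 (((Ps * gsr + Pr * grr + 1) ^ 2 - (Pr * grr * Cx) ^ 2) /
              ((Pr * grr + 1) ^ 2 - (Pr * grr * Cx) ^ 2)).

Definition R_rd (Ps Pr Cx grd gsd : R) : R :=
  / 2 * log2 (((Pr * grd + Ps * gsd + 1) ^ 2 - (Pr * grd * Cx) ^ 2) /
              ((Ps * gsd + 1) ^ 2)).

Definition gammar (r : R) : R := Rpower 2 (2 * r) - 1.

Definition Psi (r x : R) : R := sqrt (1 + gammar r * (1 - x ^ 2)) - 1.

Definition P_EE (S : prob_space) (Ps Pr Cx r : R)
    (gsr grr grd gsd : S -> R) : R :=
  ps_P S (fun w => Rmin (R_sr Ps Pr Cx (gsr w) (grr w))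
                        (R_rd Ps Pr Cx (grd w) (gsd w)) < r).

Definition alpha (Pr pirr : R) : R := Pr * pirr / (Pr * pirr + 1).

Definition P_UB_RF (Ps Pr Cx r pisr pirr pird pisd : R) : R :=
  let a := Psi r Cx / (Pr * pird * (1 - Cx ^ 2)) in
  1 - exp (- (a + (Pr * pirr + 1) / (Ps * pisr) * Psi r (alpha Pr pirr * Cx)))
      / (Ps * pisd * a + 1).

(* Main.v *)
Require Import Defs.
From Stdlib Require Import Reals Lra Lia Psatz Classical FunctionalExtensionality PropExtensionality ZArith.
Open Scope R_scope.


Lemma pred_ext {T : Type} (A B : T -> Prop) : (forall w, A w <-> B w) -> A = B.
Proof. intro H; apply functional_extensionality; intro w; apply propositional_extensionality; apply H. Qed.

Lemma meas_ext (Sp : prob_space) (A B : Sp -> Prop) :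
  (forall w, A w <-> B w) -> ps_meas Sp A -> ps_meas Sp B.
Proof. intros H; rewrite (pred_ext A B H); auto. Qed.

Lemma P_ext (Sp : prob_space) (A B : Sp -> Prop) :
  (forall w, A w <-> B w) -> ps_P Sp A = ps_P Sp B.
Proof. intros H; rewrite (pred_ext A B H); auto. Qed.

Lemma meas_False (Sp : prob_space) : ps_meas Sp (fun _ => False).
Proof.
  apply (meas_ext Sp (fun w => ~ True)); [intros; tauto|].
  apply ps_meas_compl, ps_meas_full.
Qed.

Lemma meas_or (Sp : prob_space) (A B : Sp -> Prop) :
  ps_meas Sp A -> ps_meas Sp B -> ps_meas Sp (fun w => A w \/ B w).
Proof.
  intros HA HB.
  apply (meas_ext Sp (fun w => exists n, (match n with O => A | _ => B end) w)).
  - intro w; split.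
    + intros [[|n] H]; auto.
    + intros [H|H]; [exists O | exists (S O)]; auto.
  - apply ps_meas_cunion; intros [|n]; auto.
Qed.

Lemma meas_not (Sp : prob_space) (A : Sp -> Prop) : ps_meas Sp A -> ps_meas Sp (fun w => ~ A w).
Proof. apply ps_meas_compl. Qed.

Lemma meas_and (Sp : prob_space) (A B : Sp -> Prop) :
  ps_meas Sp A -> ps_meas Sp B -> ps_meas Sp (fun w => A w /\ B w).
Proof.
  intros HA HB.
  apply (meas_ext Sp (fun w => ~ (~ A w \/ ~ B w))).
  - intro w; split; [intro H; split; apply NNPP; tauto | tauto].
  - apply meas_not, meas_or; apply meas_not; auto.
Qed.

Lemma meas_True (Sp : prob_space) : ps_meas Sp (fun _ => True).
Proof. apply ps_meas_full. Qed.

Lemma meas_union_lt (Sp : prob_space) (N : nat) (B : nat -> Sp -> Prop) :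
  (forall k, ps_meas Sp (B k)) -> ps_meas Sp (fun w => exists k, (k < N)%nat /\ B k w).
Proof.
  intros HB; induction N.
  - apply (meas_ext Sp (fun _ => False)); [|apply meas_False].
    intro w; split; [tauto| intros [k [Hk _]]; lia].
  - apply (meas_ext Sp (fun w => (exists k, (k < N)%nat /\ B k w) \/ B N w)).
    + intro w; split.
      * intros [[k [Hk H]]|H]; [exists k; split; [lia|auto]|exists N; split; [lia|auto]].
      * intros [k [Hk H]]. destruct (Nat.eq_dec k N) as [->|Hne]; [right; auto|left; exists k; split; [lia|auto]].
    + apply meas_or; auto.
Qed.

Lemma P_empty (Sp : prob_space) : ps_P Sp (fun _ => False) = 0.
Proof.
  pose proof (ps_P_sigma_additive Sp (fun _ _ => False)) as H.
  assert (Hm : forall n:nat, ps_meas Sp (fun _ => False)) by (intros; apply meas_False).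
  specialize (H Hm (fun m n w _ H _ => H)). cbv beta in H.
  rewrite (P_ext Sp (fun w => exists n:nat, False) (fun _ => False)) in H
    by (intro w; split; [intros [_ []]|tauto]).
  set (c := ps_P Sp (fun _ => False)) in *.
  assert (Hc : 0 <= c) by (apply ps_P_nonneg, meas_False).
  destruct (Rle_lt_or_eq_dec _ _ Hc) as [Hlt|Heq]; [|auto].
  exfalso. destruct (H c Hlt) as [N HN].
  specialize (HN (S N) (Nat.le_succ_diag_r N)).
  rewrite sum_cte in HN. unfold Rdist in HN.
  rewrite S_INR, S_INR in HN.
  pose proof (pos_INR N).
  rewrite Rabs_right in HN by nra. nra.
Qed.

Lemma P_or (Sp : prob_space) (A B : Sp -> Prop) :
  ps_meas Sp A -> ps_meas Sp B -> (forall w, A w -> B w -> False) ->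
  ps_P Sp (fun w => A w \/ B w) = ps_P Sp A + ps_P Sp B.
Proof.
  intros HA HB Hd.
  set (F := fun n : nat => match n with O => A | S O => B | _ => fun _ => False end).
  assert (HF : forall n, ps_meas Sp (F n)).
  { intros [|[|n]]; simpl; auto using meas_False. }
  assert (Hdis : forall m n w, m <> n -> F m w -> F n w -> False).
  { intros [|[|m]] [|[|n]] w Hmn; simpl; try tauto; try lia; intros; eauto. }
  pose proof (ps_P_sigma_additive Sp F HF Hdis) as H. cbv beta in H.
  rewrite (P_ext Sp (fun w => exists n, F n w) (fun w => A w \/ B w)) in H.
  2:{ intro w; split.
      - intros [[|[|n]] Hn]; simpl in Hn; tauto.
      - intros [H1|H1]; [exists O|exists (S O)]; auto. }
  apply (uniqueness_sum (fun n => ps_P Sp (F n))); auto.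
  intros eps Heps. exists (S O). intros n Hn.
  assert (E : sum_f_R0 (fun n => ps_P Sp (F n)) n = ps_P Sp A + ps_P Sp B).
  { destruct n as [|n]; [lia|]. clear Hn. induction n.
    - simpl. reflexivity.
    - rewrite tech5, IHn. simpl. rewrite P_empty. ring. }
  rewrite E. unfold Rdist. rewrite Rminus_diag, Rabs_R0. auto.
Qed.

Lemma P_split (Sp : prob_space) (E M : Sp -> Prop) :
  ps_meas Sp E -> ps_meas Sp M ->
  ps_P Sp E = ps_P Sp (fun w => E w /\ M w) + ps_P Sp (fun w => E w /\ ~ M w).
Proof.
  intros HE HM.
  rewrite <- P_or; try (apply meas_and; auto using meas_not); [|tauto].
  apply P_ext. intro w. split; [|tauto]. intro H. destruct (classic (M w)); tauto.
Qed.

Lemma P_nonneg (Sp : prob_space) A : ps_meas Sp A -> 0 <= ps_P Sp A.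
Proof. apply ps_P_nonneg. Qed.

Lemma P_compl (Sp : prob_space) A : ps_meas Sp A -> ps_P Sp (fun w => ~ A w) = 1 - ps_P Sp A.
Proof.
  intros HA. rewrite <- (ps_P_full Sp), (P_split Sp (fun _ => True) A); auto using meas_True.
  rewrite (P_ext Sp (fun w => True /\ A w) A) by tauto.
  rewrite (P_ext Sp (fun w => True /\ ~ A w) (fun w => ~ A w)) by tauto. ring.
Qed.

Lemma P_le1 (Sp : prob_space) A : ps_meas Sp A -> ps_P Sp A <= 1.
Proof.
  intros HA. pose proof (P_compl Sp A HA). pose proof (P_nonneg Sp _ (meas_not Sp A HA)). lra.
Qed.

Lemma P_mono (Sp : prob_space) (A B : Sp -> Prop) : ps_meas Sp A -> ps_meas Sp B ->
  (forall w, A w -> B w) -> ps_P Sp A <= ps_P Sp B.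
Proof.
  intros HA HB Hs. rewrite (P_split Sp B A HB HA).
  rewrite (P_ext Sp (fun w => B w /\ A w) A) by (intro w; split; [tauto|auto]).
  pose proof (P_nonneg Sp _ (meas_and Sp _ _ HB (meas_not Sp A HA))). lra.
Qed.

Fixpoint sumN (f : nat -> R) (n : nat) : R :=
  match n with O => 0 | S n => sumN f n + f n end.

Lemma P_union_lt (Sp : prob_space) (N : nat) (B : nat -> Sp -> Prop) :
  (forall k, ps_meas Sp (B k)) ->
  (forall k l w, k <> l -> B k w -> B l w -> False) ->
  ps_P Sp (fun w => exists k, (k < N)%nat /\ B k w) = sumN (fun k => ps_P Sp (B k)) N.
Proof.
  intros HB Hd. induction N.
  - simpl. rewrite <- (P_empty Sp). apply P_ext. intro w; split; [intros [k [Hk _]]; lia|tauto].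
  - simpl. rewrite <- IHN.
    rewrite <- P_or; auto using meas_union_lt.
    + apply P_ext. intro w; split.
      * intros [k [Hk H]]. destruct (Nat.eq_dec k N) as [->|Hne]; [right; auto|left; exists k; split; [lia|auto]].
      * intros [[k [Hk H]]|H]; [exists k; split; [lia|auto]|exists N; split; [lia|auto]].
    + intros w [k [Hk H1]] H2. apply (Hd k N w); auto; lia.
Qed.


Lemma small_zero (x K : R) : (forall n : nat, Rabs x <= K / (INR n + 1)) -> x = 0.
Proof.
  intros H. destruct (Req_dec x 0) as [|Hx]; auto. exfalso.
  assert (Hax : 0 < Rabs x) by (apply Rabs_pos_lt; auto).
  assert (HK : 0 <= K).
  { specialize (H O). simpl in H. lra. }
  destruct (archimed_cor1 (Rabs x / (K + 1))) as [N [HN HN0]].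
  { apply Rdiv_lt_0_compat; lra. }
  specialize (H N). assert (0 < INR N) by (apply lt_0_INR; auto).
  assert (Hb : K / (INR N + 1) < Rabs x).
  { set (y := / INR N) in *. assert (Hy : INR N * y = 1) by (unfold y; field; lra).
    assert (Hy0 : 0 < y) by (unfold y; apply Rinv_0_lt_compat; lra).
    assert (Hq : Rabs x / (K + 1) * (K + 1) = Rabs x) by (field; lra).
    assert (Hk : K / (INR N + 1) * (INR N + 1) = K) by (field; lra).
    assert (y * (K+1) < Rabs x) by nra.
    assert (K / (INR N + 1) <= y * (K+1)).
    { apply Rmult_le_reg_r with (INR N + 1); [lra|]. rewrite Hk. nra. }
    lra. }
  lra.
Qed.

Lemma exp_neg_bound (x m : R) : 0 < m -> 0 <= x -> exp (- x / m) <= m / (m + x).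
Proof.
  intros Hm Hx. unfold Rdiv at 1. rewrite Ropp_mult_distr_l_reverse, exp_Ropp.
  pose proof (exp_ineq1_le (x * / m)). pose proof (exp_pos (x * /m)).
  assert (E : m / (m + x) = / (1 + x * / m)) by (field; lra).
  rewrite E. apply Rinv_le_contravar; auto.
  assert (0 <= x * / m) by (apply Rmult_le_pos; auto; left; apply Rinv_0_lt_compat; auto). lra.
Qed.

Lemma exp_cdf (Sp : prob_space) m X : exponential_rv Sp m X -> forall t, 0 <= t ->
  ps_P Sp (fun w => X w <= t) = 1 - exp (- t / m).
Proof. intros [_ [_ H]]; auto. Qed.

Lemma rv_meas (Sp : prob_space) m X : exponential_rv Sp m X -> forall t, ps_meas Sp (fun w => X w <= t).
Proof. intros [H _]; auto. Qed.

Lemma drop (Sp : prob_space) (E : Sp -> Prop) (X : Sp -> R) (m c : R) :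
  0 < m -> exponential_rv Sp m X -> ps_meas Sp E -> 0 <= c <= 1 ->
  (forall n : nat, ps_P Sp (fun w => E w /\ X w <= INR n) = c * (1 - exp (- INR n / m))) ->
  ps_P Sp E = c.
Proof.
  intros Hm HX HE Hc H.
  cut (ps_P Sp E - c = 0); [lra|].
  apply (small_zero _ (2 * (m + 1))). intro n.
  pose proof (pos_INR n) as Hn. pose proof (rv_meas Sp m X HX) as HXm.
  rewrite (P_split Sp E (fun w => X w <= INR n)); auto using HXm.
  rewrite H.
  assert (H1 : ps_P Sp (fun w => E w /\ ~ X w <= INR n) <= exp (- INR n / m)).
  { apply Rle_trans with (ps_P Sp (fun w => ~ X w <= INR n)).
    - apply P_mono; try tauto; apply meas_and || apply meas_not; auto using HXm.
      apply meas_not; auto using HXm.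
    - rewrite P_compl by (apply (rv_meas Sp m X HX)). rewrite (exp_cdf Sp m X HX); auto. lra. }
  assert (H0 : 0 <= ps_P Sp (fun w => E w /\ ~ X w <= INR n)).
  { apply P_nonneg, meas_and; auto. apply meas_not; apply (rv_meas Sp m X HX). }
  pose proof (exp_neg_bound (INR n) m Hm Hn) as Hb.
  assert (Hb2 : m / (m + INR n) <= (m + 1) / (INR n + 1)).
  { apply Rmult_le_reg_r with ((m + INR n) * (INR n + 1)). nra.
    unfold Rdiv. field_simplify; try lra. nra. }
  pose proof (exp_pos (- INR n / m)).
  apply Rabs_le. unfold Rdiv in *. split; nra.
Qed.


Definition Qo (t : option R) (x : R) : Prop := match t with Some t => x <= t | None => True end.
Definition Lo (l : option R) (x : R) : Prop := match l with Some a => a < x | None => True end.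
Definition Iv (l h : option R) (x : R) : Prop := Lo l x /\ Qo h x.
Definition Fo (Sp : prob_space) (X : Sp -> R) (t : option R) : R :=
  match t with Some t => ps_P Sp (fun w => X w <= t) | None => 1 end.
Definition FLo (Sp : prob_space) (X : Sp -> R) (l : option R) : R :=
  match l with Some a => ps_P Sp (fun w => X w <= a) | None => 0 end.

Definition setup (Sp : prob_space) (m1 m2 m3 m4 : R) (X1 X2 X3 X4 : Sp -> R) : Prop :=
  0 < m1 /\ 0 < m2 /\ 0 < m3 /\ 0 < m4 /\
  exponential_rv Sp m1 X1 /\ exponential_rv Sp m2 X2 /\
  exponential_rv Sp m3 X3 /\ exponential_rv Sp m4 X4 /\
  mutually_independent4 Sp X1 X2 X3 X4.

Lemma meas_Qo (Sp : prob_space) m X t : exponential_rv Sp m X -> ps_meas Sp (fun w => Qo t (X w)).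
Proof. intros HX. destruct t; simpl; [apply (rv_meas Sp m X HX)|apply meas_True]. Qed.

Lemma meas_Iv (Sp : prob_space) m X l h : exponential_rv Sp m X -> ps_meas Sp (fun w => Iv l h (X w)).
Proof.
  intros HX. unfold Iv. apply meas_and; [|apply (meas_Qo Sp m X h HX)].
  destruct l as [a|]; simpl; [|apply meas_True].
  apply (meas_ext Sp (fun w => ~ X w <= a)). intro w; split; [apply Rnot_le_lt|lra].
  apply meas_not, (rv_meas Sp m X HX).
Qed.

Lemma Fo_range (Sp : prob_space) m X t : exponential_rv Sp m X -> 0 <= Fo Sp X t <= 1.
Proof.
  intros HX. destruct t; simpl; [|lra]. split; [apply P_nonneg|apply P_le1]; apply (rv_meas Sp m X HX).
Qed.

Lemma quad_all (Sp : prob_space) m1 m2 m3 m4 X1 X2 X3 X4 :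
  setup Sp m1 m2 m3 m4 X1 X2 X3 X4 ->
  forall t1 t2 t3 t4,
  ps_P Sp (fun w => Qo t1 (X1 w) /\ Qo t2 (X2 w) /\ Qo t3 (X3 w) /\ Qo t4 (X4 w)) =
  Fo Sp X1 t1 * Fo Sp X2 t2 * Fo Sp X3 t3 * Fo Sp X4 t4.
Proof.
  intros (Hm1 & Hm2 & Hm3 & Hm4 & HX1 & HX2 & HX3 & HX4 & Hind).
  assert (Hme : forall t1 t2 t3 t4, ps_meas Sp (fun w => Qo t1 (X1 w) /\ Qo t2 (X2 w) /\ Qo t3 (X3 w) /\ Qo t4 (X4 w))).
  { intros; repeat apply meas_and; eapply meas_Qo; eauto. }
  pose proof (Fo_range Sp m1 X1) as R1. pose proof (Fo_range Sp m2 X2) as R2.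
  pose proof (Fo_range Sp m3 X3) as R3. pose proof (Fo_range Sp m4 X4) as R4.
  assert (H0 : forall a b c d, ps_P Sp (fun w => Qo (Some a) (X1 w) /\ Qo (Some b) (X2 w) /\ Qo (Some c) (X3 w) /\ Qo (Some d) (X4 w)) =
      Fo Sp X1 (Some a) * Fo Sp X2 (Some b) * Fo Sp X3 (Some c) * Fo Sp X4 (Some d)).
  { intros. simpl. apply Hind. }
  assert (Hn : forall (X : Sp -> R) m (n : nat), exponential_rv Sp m X -> Fo Sp X (Some (INR n)) = 1 - exp (- INR n / m)).
  { intros X m n HX. simpl. apply (exp_cdf Sp m X HX), pos_INR. }
  assert (H1 : forall t1 b c d, ps_P Sp (fun w => Qo t1 (X1 w) /\ Qo (Some b) (X2 w) /\ Qo (Some c) (X3 w) /\ Qo (Some d) (X4 w)) =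
      Fo Sp X1 t1 * Fo Sp X2 (Some b) * Fo Sp X3 (Some c) * Fo Sp X4 (Some d)).
  { intros [a|] b c d; [apply H0|].
    specialize (R1 None HX1); specialize (R2 (Some b) HX2); specialize (R3 (Some c) HX3); specialize (R4 (Some d) HX4).
    apply (drop Sp _ X1 m1); auto.
    - split; [repeat apply Rmult_le_pos; lra|].
      apply Rle_trans with (1 * 1 * 1 * 1); [|lra]. repeat apply Rmult_le_compat; try nra. all: try (repeat apply Rmult_le_pos; lra).
    - intro n.
      transitivity (Fo Sp X1 (Some (INR n)) * Fo Sp X2 (Some b) * Fo Sp X3 (Some c) * Fo Sp X4 (Some d)).
      + rewrite <- H0. apply P_ext. intro w; simpl; tauto.
      + rewrite (Hn X1 m1 n HX1). simpl Fo at 4. ring. }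
  assert (H2 : forall t1 t2 c d, ps_P Sp (fun w => Qo t1 (X1 w) /\ Qo t2 (X2 w) /\ Qo (Some c) (X3 w) /\ Qo (Some d) (X4 w)) =
      Fo Sp X1 t1 * Fo Sp X2 t2 * Fo Sp X3 (Some c) * Fo Sp X4 (Some d)).
  { intros t1 [b|] c d; [apply H1|].
    specialize (R1 t1 HX1); specialize (R2 None HX2); specialize (R3 (Some c) HX3); specialize (R4 (Some d) HX4).
    apply (drop Sp _ X2 m2); auto.
    - split; [repeat apply Rmult_le_pos; lra|].
      apply Rle_trans with (1 * 1 * 1 * 1); [|lra]. repeat apply Rmult_le_compat; try nra. all: try (repeat apply Rmult_le_pos; lra).
    - intro n.
      transitivity (Fo Sp X1 t1 * Fo Sp X2 (Some (INR n)) * Fo Sp X3 (Some c) * Fo Sp X4 (Some d)).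
      + rewrite <- H1. apply P_ext. intro w; simpl; tauto.
      + rewrite (Hn X2 m2 n HX2). simpl Fo at 5. ring. }
  assert (H3 : forall t1 t2 t3 d, ps_P Sp (fun w => Qo t1 (X1 w) /\ Qo t2 (X2 w) /\ Qo t3 (X3 w) /\ Qo (Some d) (X4 w)) =
      Fo Sp X1 t1 * Fo Sp X2 t2 * Fo Sp X3 t3 * Fo Sp X4 (Some d)).
  { intros t1 t2 [c|] d; [apply H2|].
    specialize (R1 t1 HX1); specialize (R2 t2 HX2); specialize (R3 None HX3); specialize (R4 (Some d) HX4).
    apply (drop Sp _ X3 m3); auto.
    - split; [repeat apply Rmult_le_pos; lra|].
      apply Rle_trans with (1 * 1 * 1 * 1); [|lra]. repeat apply Rmult_le_compat; try nra. all: try (repeat apply Rmult_le_pos; lra).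
    - intro n.
      transitivity (Fo Sp X1 t1 * Fo Sp X2 t2 * Fo Sp X3 (Some (INR n)) * Fo Sp X4 (Some d)).
      + rewrite <- H2. apply P_ext. intro w; simpl; tauto.
      + rewrite (Hn X3 m3 n HX3). simpl Fo at 6. ring. }
  intros t1 t2 t3 [d|]; [apply H3|].
  specialize (R1 t1 HX1); specialize (R2 t2 HX2); specialize (R3 t3 HX3); specialize (R4 None HX4).
  apply (drop Sp _ X4 m4); auto.
  - split; [repeat apply Rmult_le_pos; lra|].
    apply Rle_trans with (1 * 1 * 1 * 1); [|lra]. repeat apply Rmult_le_compat; try nra. all: try (repeat apply Rmult_le_pos; lra).
  - intro n.
    transitivity (Fo Sp X1 t1 * Fo Sp X2 t2 * Fo Sp X3 t3 * Fo Sp X4 (Some (INR n))).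
    + rewrite <- H3. apply P_ext. intro w; simpl; tauto.
    + rewrite (Hn X4 m4 n HX4). simpl Fo at 7. ring.
Qed.

Definition okb (l h : option R) : Prop := match l with Some a => Qo h a | None => True end.

Lemma Iv_some a h x : Iv (Some a) h x <-> Iv None h x /\ ~ x <= a.
Proof. unfold Iv; simpl; split; [intros [H1 H2]; split; [tauto|lra]|intros [[_ H1] H2]; split; [lra|auto]]. Qed.

Lemma Iv_none_some a h x : Qo h a -> (Iv None (Some a) x <-> Iv None h x /\ x <= a).
Proof. unfold Iv; destruct h; simpl; intros; split; intros; try tauto; split; try tauto; lra. Qed.

Lemma Iv_none h x : Iv None h x <-> Qo h x.
Proof. unfold Iv; simpl; tauto. Qed.

Lemma box_all (Sp : prob_space) m1 m2 m3 m4 X1 X2 X3 X4 :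
  setup Sp m1 m2 m3 m4 X1 X2 X3 X4 ->
  forall l1 h1 l2 h2 l3 h3 l4 h4, okb l1 h1 -> okb l2 h2 -> okb l3 h3 -> okb l4 h4 ->
  ps_P Sp (fun w => Iv l1 h1 (X1 w) /\ Iv l2 h2 (X2 w) /\ Iv l3 h3 (X3 w) /\ Iv l4 h4 (X4 w)) =
  (Fo Sp X1 h1 - FLo Sp X1 l1) * (Fo Sp X2 h2 - FLo Sp X2 l2) *
  (Fo Sp X3 h3 - FLo Sp X3 l3) * (Fo Sp X4 h4 - FLo Sp X4 l4).
Proof.
  intros Hs. pose proof Hs as (Hm1 & Hm2 & Hm3 & Hm4 & HX1 & HX2 & HX3 & HX4 & Hind).
  assert (Hme : forall l1 h1 l2 h2 l3 h3 l4 h4,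
    ps_meas Sp (fun w => Iv l1 h1 (X1 w) /\ Iv l2 h2 (X2 w) /\ Iv l3 h3 (X3 w) /\ Iv l4 h4 (X4 w))).
  { intros; apply meas_and; [|apply meas_and; [|apply meas_and]]; eapply meas_Iv; eauto. }
  assert (M1 := rv_meas Sp m1 X1 HX1). assert (M2 := rv_meas Sp m2 X2 HX2).
  assert (M3 := rv_meas Sp m3 X3 HX3). assert (M4 := rv_meas Sp m4 X4 HX4).
  assert (B0 : forall h1 h2 h3 h4,
    ps_P Sp (fun w => Iv None h1 (X1 w) /\ Iv None h2 (X2 w) /\ Iv None h3 (X3 w) /\ Iv None h4 (X4 w)) =
    (Fo Sp X1 h1 - FLo Sp X1 None) * (Fo Sp X2 h2 - FLo Sp X2 None) *
    (Fo Sp X3 h3 - FLo Sp X3 None) * (Fo Sp X4 h4 - FLo Sp X4 None)).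
  { intros. simpl FLo. rewrite !Rminus_0_r, <- (quad_all Sp m1 m2 m3 m4 X1 X2 X3 X4 Hs).
    apply P_ext; intro w; rewrite !Iv_none; tauto. }
  assert (B1 : forall l1 h1 h2 h3 h4, okb l1 h1 ->
    ps_P Sp (fun w => Iv l1 h1 (X1 w) /\ Iv None h2 (X2 w) /\ Iv None h3 (X3 w) /\ Iv None h4 (X4 w)) =
    (Fo Sp X1 h1 - FLo Sp X1 l1) * (Fo Sp X2 h2 - FLo Sp X2 None) *
    (Fo Sp X3 h3 - FLo Sp X3 None) * (Fo Sp X4 h4 - FLo Sp X4 None)).
  { intros [a|] h1 h2 h3 h4 Hok; [|apply B0]. simpl in Hok.
    pose proof (P_split Sp _ (fun w => X1 w <= a) (Hme None h1 None h2 None h3 None h4) (M1 a)) as E.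
    rewrite B0 in E.
    rewrite (P_ext Sp _ (fun w => Iv None (Some a) (X1 w) /\ Iv None h2 (X2 w) /\ Iv None h3 (X3 w) /\ Iv None h4 (X4 w))) in E
      by (intro w; rewrite (Iv_none_some a h1 _ Hok); tauto).
    rewrite B0 in E.
    rewrite (P_ext Sp _ (fun w => (Iv None h1 (X1 w) /\ Iv None h2 (X2 w) /\ Iv None h3 (X3 w) /\ Iv None h4 (X4 w)) /\ ~ X1 w <= a))
      by (intro w; rewrite Iv_some; tauto).
    simpl Fo in E |- *. simpl FLo in E |- *. lra. }
  assert (B2 : forall l1 h1 l2 h2 h3 h4, okb l1 h1 -> okb l2 h2 ->
    ps_P Sp (fun w => Iv l1 h1 (X1 w) /\ Iv l2 h2 (X2 w) /\ Iv None h3 (X3 w) /\ Iv None h4 (X4 w)) =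
    (Fo Sp X1 h1 - FLo Sp X1 l1) * (Fo Sp X2 h2 - FLo Sp X2 l2) *
    (Fo Sp X3 h3 - FLo Sp X3 None) * (Fo Sp X4 h4 - FLo Sp X4 None)).
  { intros l1 h1 [a|] h2 h3 h4 Hok1 Hok; [|apply B1; auto]. simpl in Hok.
    pose proof (P_split Sp _ (fun w => X2 w <= a) (Hme l1 h1 None h2 None h3 None h4) (M2 a)) as E.
    rewrite B1 in E by auto.
    rewrite (P_ext Sp _ (fun w => Iv l1 h1 (X1 w) /\ Iv None (Some a) (X2 w) /\ Iv None h3 (X3 w) /\ Iv None h4 (X4 w))) in E
      by (intro w; rewrite (Iv_none_some a h2 _ Hok); tauto).
    rewrite B1 in E by auto.
    rewrite (P_ext Sp _ (fun w => (Iv l1 h1 (X1 w) /\ Iv None h2 (X2 w) /\ Iv None h3 (X3 w) /\ Iv None h4 (X4 w)) /\ ~ X2 w <= a))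
      by (intro w; rewrite Iv_some; tauto).
    simpl Fo in E |- *. simpl FLo in E |- *. lra. }
  assert (B3 : forall l1 h1 l2 h2 l3 h3 h4, okb l1 h1 -> okb l2 h2 -> okb l3 h3 ->
    ps_P Sp (fun w => Iv l1 h1 (X1 w) /\ Iv l2 h2 (X2 w) /\ Iv l3 h3 (X3 w) /\ Iv None h4 (X4 w)) =
    (Fo Sp X1 h1 - FLo Sp X1 l1) * (Fo Sp X2 h2 - FLo Sp X2 l2) *
    (Fo Sp X3 h3 - FLo Sp X3 l3) * (Fo Sp X4 h4 - FLo Sp X4 None)).
  { intros l1 h1 l2 h2 [a|] h3 h4 Hok1 Hok2 Hok; [|apply B2; auto]. simpl in Hok.
    pose proof (P_split Sp _ (fun w => X3 w <= a) (Hme l1 h1 l2 h2 None h3 None h4) (M3 a)) as E.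
    rewrite B2 in E by auto.
    rewrite (P_ext Sp _ (fun w => Iv l1 h1 (X1 w) /\ Iv l2 h2 (X2 w) /\ Iv None (Some a) (X3 w) /\ Iv None h4 (X4 w))) in E
      by (intro w; rewrite (Iv_none_some a h3 _ Hok); tauto).
    rewrite B2 in E by auto.
    rewrite (P_ext Sp _ (fun w => (Iv l1 h1 (X1 w) /\ Iv l2 h2 (X2 w) /\ Iv None h3 (X3 w) /\ Iv None h4 (X4 w)) /\ ~ X3 w <= a))
      by (intro w; rewrite Iv_some; tauto).
    simpl Fo in E |- *. simpl FLo in E |- *. lra. }
  intros l1 h1 l2 h2 l3 h3 [a|] h4 Hok1 Hok2 Hok3 Hok; [|apply B3; auto]. simpl in Hok.
  pose proof (P_split Sp _ (fun w => X4 w <= a) (Hme l1 h1 l2 h2 l3 h3 None h4) (M4 a)) as E.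
  rewrite B3 in E by auto.
  rewrite (P_ext Sp _ (fun w => Iv l1 h1 (X1 w) /\ Iv l2 h2 (X2 w) /\ Iv l3 h3 (X3 w) /\ Iv None (Some a) (X4 w))) in E
    by (intro w; rewrite (Iv_none_some a h4 _ Hok); tauto).
  rewrite B3 in E by auto.
  rewrite (P_ext Sp _ (fun w => (Iv l1 h1 (X1 w) /\ Iv l2 h2 (X2 w) /\ Iv l3 h3 (X3 w) /\ Iv None h4 (X4 w)) /\ ~ X4 w <= a))
    by (intro w; rewrite Iv_some; tauto).
  simpl Fo in E |- *. simpl FLo in E |- *. lra.
Qed.


Definition mf (Sp : prob_space) (Z : Sp -> R) : Prop := forall t, ps_meas Sp (fun w => Z w <= t).

Lemma mf_ext (Sp : prob_space) (Z1 Z2 : Sp -> R) : (forall w, Z1 w = Z2 w) -> mf Sp Z1 -> mf Sp Z2.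
Proof. intros H. replace Z2 with Z1; auto. apply functional_extensionality; auto. Qed.

Lemma meas_const (Sp : prob_space) (P : Prop) : ps_meas Sp (fun _ => P).
Proof.
  destruct (classic P) as [H|H].
  - apply (meas_ext Sp (fun _ => True)); [tauto|apply meas_True].
  - apply (meas_ext Sp (fun _ => False)); [tauto|apply meas_False].
Qed.

Lemma meas_lt (Sp : prob_space) Z t : mf Sp Z -> ps_meas Sp (fun w => Z w < t).
Proof.
  intros HZ. apply (meas_ext Sp (fun w => exists n : nat, Z w <= t - / (INR n + 1))).
  - intro w; split.
    + intros [n Hn]. pose proof (pos_INR n). assert (0 < / (INR n + 1)) by (apply Rinv_0_lt_compat; lra). lra.
    + intros H. destruct (archimed_cor1 (t - Z w)) as [N [HN HN0]]; [lra|].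
      exists N. assert (0 < INR N) by (apply lt_0_INR; auto).
      assert (/ (INR N + 1) <= / INR N) by (apply Rinv_le_contravar; lra). lra.
  - apply ps_meas_cunion. intro n. apply HZ.
Qed.

Lemma meas_gt (Sp : prob_space) Z t : mf Sp Z -> ps_meas Sp (fun w => t < Z w).
Proof.
  intros HZ. apply (meas_ext Sp (fun w => ~ Z w <= t)); [intro w; split; [apply Rnot_le_lt|lra]|].
  apply meas_not, HZ.
Qed.

Lemma meas_ge (Sp : prob_space) Z t : mf Sp Z -> ps_meas Sp (fun w => t <= Z w).
Proof.
  intros HZ. apply (meas_ext Sp (fun w => ~ Z w < t)); [intro w; split; [apply Rnot_lt_le|lra]|].
  apply meas_not, meas_lt, HZ.
Qed.

Lemma mf_const (Sp : prob_space) c : mf Sp (fun _ => c).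
Proof. intro t. apply meas_const. Qed.

Lemma mf_scale (Sp : prob_space) c Z : mf Sp Z -> mf Sp (fun w => c * Z w).
Proof.
  intros HZ t. destruct (Rtotal_order c 0) as [Hc|[Hc|Hc]].
  - apply (meas_ext Sp (fun w => t / c <= Z w)); [|apply meas_ge, HZ].
    assert (E : c * (t / c) = t) by (field; lra).
    intro w; split; intro H; apply Rnot_lt_le; intro Hc2; nra.
  - subst c. apply (meas_ext Sp (fun _ => 0 <= t)); [intro w; rewrite Rmult_0_l; tauto|apply meas_const].
  - apply (meas_ext Sp (fun w => Z w <= t / c)); [|apply HZ].
    assert (E : c * (t / c) = t) by (field; lra).
    intro w; split; intro H; apply Rnot_lt_le; intro Hc2; nra.
Qed.

Definition qf (p k m : nat) : R := (INR p - INR k) / (INR m + 1).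

Lemma IZR_nat_diff (z : Z) : IZR z = INR (Z.to_nat z) - INR (Z.to_nat (- z)).
Proof.
  destruct z as [|p|p].
  - simpl. lra.
  - rewrite (INR_IZR_INZ (Z.to_nat (Z.pos p))), Z2Nat.id by lia.
    replace (Z.to_nat (- Z.pos p)) with 0%nat by reflexivity. simpl INR. lra.
  - rewrite (INR_IZR_INZ (Z.to_nat (- Z.neg p))), Z2Nat.id by lia.
    replace (Z.to_nat (Z.neg p)) with 0%nat by reflexivity. simpl INR.
    replace (- Z.neg p)%Z with (Z.pos p) by reflexivity. rewrite IZR_NEG. lra.
Qed.

Lemma dense_qf (x y : R) : x < y -> exists p k m, x < qf p k m < y.
Proof.
  intros Hxy. destruct (archimed_cor1 (y - x)) as [M [HM HM0]]; [lra|].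
  assert (HMp : 0 < INR M) by (apply lt_0_INR; auto).
  destruct (archimed (x * INR M)) as [H1 H2].
  set (z := up (x * INR M)) in *.
  exists (Z.to_nat z), (Z.to_nat (- z)), (M - 1)%nat.
  unfold qf. rewrite <- IZR_nat_diff.
  replace (INR (M - 1) + 1) with (INR M) by (rewrite minus_INR by lia; simpl; lra).
  split.
  - apply Rmult_lt_reg_r with (INR M); auto. unfold Rdiv. rewrite Rmult_assoc, Rinv_l by lra. lra.
  - apply Rmult_lt_reg_r with (INR M); auto. unfold Rdiv. rewrite Rmult_assoc, Rinv_l by lra.
    assert (INR M * / INR M = 1) by (field; lra). nra.
Qed.

Lemma mf_add (Sp : prob_space) X Y : mf Sp X -> mf Sp Y -> mf Sp (fun w => X w + Y w).
Proof.
  intros HX HY t.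
  apply (meas_ext Sp (fun w => ~ exists p k m : nat, qf p k m < X w /\ t - qf p k m < Y w)).
  - intro w; split.
    + intro H. apply Rnot_lt_le. intro Hc. apply H.
      destruct (dense_qf (t - Y w) (X w)) as (p & k & m & Hq); [lra|].
      exists p, k, m. split; lra.
    + intros H (p & k & m & H1 & H2). lra.
  - apply meas_not. repeat (apply ps_meas_cunion; intro).
    apply meas_and; [apply meas_gt, HX|apply meas_gt, HY].
Qed.

Lemma mf_sq (Sp : prob_space) Z : mf Sp Z -> mf Sp (fun w => Z w * Z w).
Proof.
  intros HZ t. destruct (Rlt_or_le t 0) as [Ht|Ht].
  - apply (meas_ext Sp (fun _ => False)); [|apply meas_False].
    intro w; split; [tauto|]. intros H. nra.
  - apply (meas_ext Sp (fun w => - sqrt t <= Z w /\ Z w <= sqrt t)).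
    + pose proof (sqrt_sqrt t Ht) as Hs1. pose proof (sqrt_pos t) as Hs2.
      intro w; split; [intros [H1 H2]; nra|].
      intros H3. split; apply Rnot_lt_le; intro Hc; nra.
    + apply meas_and; [apply meas_ge, HZ|apply HZ].
Qed.

Lemma mf_opp (Sp : prob_space) Z : mf Sp Z -> mf Sp (fun w => - Z w).
Proof. intros HZ. apply (mf_ext Sp (fun w => -1 * Z w)); [intro; ring|apply mf_scale; auto]. Qed.

Lemma mf_mul (Sp : prob_space) X Y : mf Sp X -> mf Sp Y -> mf Sp (fun w => X w * Y w).
Proof.
  intros HX HY.
  apply (mf_ext Sp (fun w => / 4 * ((X w + Y w) * (X w + Y w) + - ((X w + - Y w) * (X w + - Y w))))).
  { intro; field. }
  apply mf_scale, mf_add; [apply mf_sq, mf_add; auto|apply mf_opp, mf_sq, mf_add; auto using mf_opp].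
Qed.

Lemma mf_inv (Sp : prob_space) Z : mf Sp Z -> mf Sp (fun w => / Z w).
Proof.
  intros HZ t.
  apply (meas_ext Sp (fun w => (Z w <= 0 /\ 0 <= Z w /\ 0 <= t) \/ (0 < Z w /\ 0 < t /\ / t <= Z w)
                             \/ (Z w < 0 /\ (0 <= t \/ (t < 0 /\ / t <= Z w))))).
  - intro w. destruct (Rtotal_order (Z w) 0) as [Hz|[Hz|Hz]].
    + assert (Hi : / Z w < 0) by (apply Rinv_lt_0_compat; auto).
      assert (Hzi : Z w * / Z w = 1) by (field; lra).
      split.
      * intros [H|[H|[_ [H|[H1 H2]]]]]; try lra.
        assert (Ht : t * / t = 1) by (field; lra).
        assert (/ t < 0) by (apply Rinv_lt_0_compat; auto). nra.
      * intros H. right; right. split; auto. destruct (Rle_or_lt 0 t); [left; auto|right; split; auto].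
        assert (Ht : t * / t = 1) by (field; lra).
        assert (/ t < 0) by (apply Rinv_lt_0_compat; auto). nra.
    + rewrite Hz, Rinv_0. split; [intros [H|[H|H]]; lra|]. intro; left; lra.
    + assert (Hi : 0 < / Z w) by (apply Rinv_0_lt_compat; auto).
      assert (Hzi : Z w * / Z w = 1) by (field; lra).
      split.
      * intros [H|[[_ [H1 H2]]|H]]; try lra.
        assert (Ht : t * / t = 1) by (field; lra).
        assert (0 < / t) by (apply Rinv_0_lt_compat; auto). nra.
      * intros H. right; left. assert (0 < t) by lra. split; auto. split; auto.
        assert (Ht : t * / t = 1) by (field; lra).
        assert (0 < / t) by (apply Rinv_0_lt_compat; auto). nra.
  - apply meas_or; [|apply meas_or].
    + apply meas_and; [apply HZ|apply meas_and; [apply meas_ge, HZ|apply meas_const]].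
    + apply meas_and; [apply meas_gt, HZ|apply meas_and; [apply meas_const|apply meas_ge, HZ]].
    + apply meas_and; [apply meas_lt, HZ|apply meas_or; [apply meas_const|apply meas_and; [apply meas_const|apply meas_ge, HZ]]].
Qed.

Lemma ln_nonpos x : x <= 0 -> ln x = 0.
Proof. intros H. unfold ln. destruct (Rlt_dec 0 x); [exfalso; lra|auto]. Qed.

Lemma ln_le_iff x t : 0 < x -> (ln x <= t <-> x <= exp t).
Proof.
  intros Hx. split; intro H.
  - rewrite <- (exp_ln x Hx). destruct H as [H|H]; [left; apply exp_increasing; auto|right; rewrite H; auto].
  - rewrite <- (ln_exp t). destruct H as [H|H]; [left; apply ln_increasing; auto|right; rewrite H; auto].
Qed.

Lemma mf_ln (Sp : prob_space) Z : mf Sp Z -> mf Sp (fun w => ln (Z w)).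
Proof.
  intros HZ t.
  apply (meas_ext Sp (fun w => (Z w <= 0 /\ 0 <= t) \/ (0 < Z w /\ Z w <= exp t))).
  - intro w. destruct (Rle_or_lt (Z w) 0) as [Hz|Hz].
    + rewrite (ln_nonpos _ Hz). lra.
    + rewrite (ln_le_iff _ _ Hz). lra.
  - apply meas_or; apply meas_and; try apply meas_const; try apply HZ; apply meas_gt, HZ.
Qed.


Lemma mf_pow2 (Sp : prob_space) Z : mf Sp Z -> mf Sp (fun w => Z w ^ 2).
Proof. intros HZ. apply (mf_ext Sp (fun w => Z w * Z w)); [intro; ring|apply mf_sq; auto]. Qed.

Lemma mf_minus (Sp : prob_space) X Y : mf Sp X -> mf Sp Y -> mf Sp (fun w => X w - Y w).
Proof. intros. apply (mf_ext Sp (fun w => X w + - Y w)); [intro; ring|apply mf_add; auto using mf_opp]. Qed.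

Lemma mf_div (Sp : prob_space) X Y : mf Sp X -> mf Sp Y -> mf Sp (fun w => X w / Y w).
Proof. intros. apply (mf_ext Sp (fun w => X w * / Y w)); [intro; reflexivity|apply mf_mul; auto using mf_inv]. Qed.

Ltac mfs := repeat first [ apply mf_const | apply mf_add | apply mf_minus | apply mf_mul | apply mf_div
  | apply mf_inv | apply mf_ln | apply mf_opp | apply mf_pow2 | assumption ].

Lemma meas_bad (Sp : prob_space) Ps Pr Cx r (gsr grr grd gsd : Sp -> R) :
  mf Sp gsr -> mf Sp grr -> mf Sp grd -> mf Sp gsd ->
  ps_meas Sp (fun w => Rmin (R_sr Ps Pr Cx (gsr w) (grr w)) (R_rd Ps Pr Cx (grd w) (gsd w)) < r).
Proof.
  intros H1 H2 H3 H4.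
  apply (meas_ext Sp (fun w => R_sr Ps Pr Cx (gsr w) (grr w) < r \/ R_rd Ps Pr Cx (grd w) (gsd w) < r)).
  - intro w. unfold Rmin. destruct (Rle_dec _ _); lra.
  - apply meas_or; apply meas_lt; unfold R_sr, R_rd, log2; mfs.
Qed.


Lemma div_nonneg a b : 0 <= a -> 0 < b -> 0 <= a / b.
Proof. intros. unfold Rdiv. apply Rmult_le_pos; auto. left; apply Rinv_0_lt_compat; auto. Qed.

Lemma gammar_pos r : 0 < r -> 0 < gammar r.
Proof.
  intros Hr. unfold gammar. pose proof (Rpower_lt 2 0 (2 * r) ltac:(lra) ltac:(lra)).
  rewrite Rpower_O in H by lra. lra.
Qed.

Lemma ln_le_mono x y : 0 < x -> x <= y -> ln x <= ln y.
Proof. intros Hx [H|H]; [left; apply ln_increasing; auto|right; rewrite H; auto]. Qed.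

Lemma ln2_pos : 0 < ln 2.
Proof. rewrite <- ln_1. apply ln_increasing; lra. Qed.

Lemma log_step r N D : 0 < D -> (1 + gammar r) * D <= N -> r <= / 2 * log2 (N / D).
Proof.
  intros HD HN. unfold gammar in HN. replace (1 + (Rpower 2 (2 * r) - 1)) with (Rpower 2 (2 * r)) in HN by ring.
  assert (Hp : 0 < Rpower 2 (2 * r)) by (unfold Rpower; apply exp_pos).
  assert (H1 : Rpower 2 (2 * r) <= N / D).
  { apply Rmult_le_reg_r with D; auto. unfold Rdiv. rewrite Rmult_assoc, Rinv_l by lra. lra. }
  pose proof (ln_le_mono _ _ Hp H1) as H2. unfold Rpower in H2. rewrite ln_exp in H2.
  unfold log2. pose proof ln2_pos.
  replace (/ 2 * (ln (N / D) / ln 2)) with (ln (N / D) / (2 * ln 2)) by (field; intro; lra).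
  apply Rmult_le_reg_r with (2 * ln 2); [lra|]. unfold Rdiv. rewrite Rmult_assoc, Rinv_l by lra. lra.
Qed.

Lemma rd_key (g C u w : R) : 0 <= g -> 0 <= C < 1 -> 0 < w ->
  w * ((sqrt (1 + g * (1 - C ^ 2)) - 1) / (1 - C ^ 2)) <= u ->
  (1 + g) * (w ^ 2) <= (u + w) ^ 2 - (u * C) ^ 2.
Proof.
  intros Hg HC Hw Hu.
  set (e := 1 - C ^ 2) in *. assert (He : 0 < e) by (unfold e; nra).
  set (sq := sqrt (1 + g * e)) in *.
  assert (Hsq : sq * sq = 1 + g * e) by (apply sqrt_sqrt; nra).
  assert (Hsq1 : 1 <= sq).
  { unfold sq. apply Rle_trans with (sqrt 1); [rewrite sqrt_1; lra|apply sqrt_le_1_alt; nra]. }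
  assert (HU : w * (sq - 1) <= e * u).
  { replace (w * (sq - 1)) with (e * (w * ((sq - 1) / e))) by (field; intro; lra).
    apply Rmult_le_compat_l; lra. }
  assert (H0 : w * sq <= e * u + w) by lra.
  assert (H2 : (w * sq) * (w * sq) <= (e * u + w) * (e * u + w)) by (apply Rmult_le_compat; nra).
  assert (H3 : e * ((1 + g) * w ^ 2) <= e * ((u + w) ^ 2 - (u * C) ^ 2)).
  { unfold e in *. nra. }
  apply Rmult_le_reg_l with e; auto.
Qed.

(* source-relay link: tangent-line bound *)
Lemma sr_key (g C v0 v s : R) : 0 < g -> 0 <= C < 1 -> 0 < v0 -> 0 <= v ->
  let al := v0 / (v0 + 1) in
  let s0 := (v0 + 1) * sqrt (1 + g * (1 - (al * C) ^ 2)) in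
  let a := 1 + g - g * C ^ 2 in
  let c := 1 + g in
  let A := c * (v0 + 1) / s0 - 1 in
  let B := (a * v0 + c) / s0 - 1 in
  0 <= A /\ 0 <= B /\ A + B * v0 = s0 - v0 - 1 /\
  (A + B * v <= s -> (1 + g) * ((v + 1) ^ 2 - (v * C) ^ 2) <= (s + v + 1) ^ 2 - (v * C) ^ 2).
Proof.
  intros Hg HC Hv0 Hv al s0 a c A B.
  assert (Hal : al * (v0 + 1) = v0) by (unfold al; field; intro; lra).
  assert (Hal1 : 0 <= al < 1) by (split; [unfold al; apply div_nonneg; lra|apply Rmult_lt_reg_r with (v0+1); [lra|]; rewrite Hal; lra]).
  assert (HaC : 0 <= al * C <= 1) by (split; nra). assert (HaC2 : (al * C) ^ 2 <= 1) by nra.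
  assert (Hin : 0 <= 1 + g * (1 - (al * C) ^ 2)) by nra.
  set (sq := sqrt (1 + g * (1 - (al * C) ^ 2))) in *.
  assert (Hsq : sq * sq = 1 + g * (1 - (al * C) ^ 2)) by (apply sqrt_sqrt; auto).
  assert (Hsq1 : 1 <= sq).
  { unfold sq. apply Rle_trans with (sqrt 1); [rewrite sqrt_1; lra|apply sqrt_le_1_alt; nra]. }
  assert (Hs0 : 0 < s0) by (unfold s0; nra).
  assert (HD0 : s0 * s0 = c * (v0 + 1) ^ 2 - g * C ^ 2 * v0 ^ 2).
  { unfold s0, c. replace ((v0 + 1) * sq * ((v0 + 1) * sq)) with ((v0 + 1) ^ 2 * (sq * sq)) by ring.
    rewrite Hsq.
    replace ((v0 + 1) ^ 2 * (1 + g * (1 - (al * C) ^ 2))) with ((v0 + 1) ^ 2 * (1 + g) - g * C ^ 2 * (al * (v0 + 1)) ^ 2) by ring.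
    rewrite Hal. ring. }
  assert (HC2 : C ^ 2 <= 1) by nra. assert (Ha1 : 1 <= a) by (unfold a; nra).
  assert (Hc1 : 1 < c) by (unfold c; lra).
  assert (HA : c * (v0 + 1) >= s0).
  { apply Rnot_lt_ge. intro Hlt.
    assert (c * (v0 + 1) * (c * (v0 + 1)) < s0 * s0) by (apply Rmult_le_0_lt_compat; nra).
    rewrite HD0 in H.
    assert (c * (v0 + 1) * (c * (v0 + 1)) - c * (v0 + 1) ^ 2 = c * (c - 1) * (v0 + 1) ^ 2) by ring.
    assert (0 <= c * (c - 1) * (v0 + 1) ^ 2) by (apply Rmult_le_pos; [apply Rmult_le_pos|]; nra).
    assert (0 <= g * C ^ 2 * v0 ^ 2) by (apply Rmult_le_pos; [apply Rmult_le_pos|]; nra).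
    lra. }
  assert (HB : a * v0 + c >= s0).
  { apply Rnot_lt_ge. intro Hlt.
    assert ((a * v0 + c) * (a * v0 + c) < s0 * s0) by (apply Rmult_le_0_lt_compat; nra).
    rewrite HD0 in H.
    assert (E1 : (a * v0 + c) * (a * v0 + c) - (c * (v0 + 1) ^ 2 - g * C ^ 2 * v0 ^ 2)
       = a * (a - 1) * v0 ^ 2 + 2 * c * (a - 1) * v0 + c * (c - 1)) by (unfold a, c; ring).
    assert (0 <= a * (a - 1) * v0 ^ 2) by (apply Rmult_le_pos; [apply Rmult_le_pos|]; nra).
    assert (0 <= 2 * c * (a - 1) * v0) by (apply Rmult_le_pos; [apply Rmult_le_pos|]; nra).
    assert (0 <= c * (c - 1)) by nra.
    lra. }
  assert (EA : A = (c * (v0 + 1) - s0) / s0) by (unfold A; field; intro; lra).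
  assert (EB : B = (a * v0 + c - s0) / s0) by (unfold B; field; intro; lra).
  split; [rewrite EA; apply div_nonneg; lra|].
  split; [rewrite EB; apply div_nonneg; lra|].
  split.
  { rewrite EA, EB. apply Rmult_eq_reg_l with s0; [|lra].
    replace (s0 * ((c * (v0 + 1) - s0) / s0 + (a * v0 + c - s0) / s0 * v0))
      with (c * (v0 + 1) - s0 + (a * v0 + c - s0) * v0) by (field; intro; lra).
    replace (s0 * (s0 - v0 - 1)) with (s0 * s0 - s0 * v0 - s0) by ring.
    rewrite HD0. unfold a, c. ring. }
  intros Hs.
  set (T := (c * (v0 + 1) + (a * v0 + c) * v) / s0).
  assert (ET : A + B * v + v + 1 = T) by (unfold A, B, T; field; intro; lra).
  assert (HT0 : 0 <= T) by (unfold T; apply div_nonneg; nra).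
  assert (HTs : T * s0 = c * (v0 + 1) + (a * v0 + c) * v) by (unfold T; field; intro; lra).
  assert (Hid : (T * s0) * (T * s0) - (c * (v + 1) ^ 2 - g * C ^ 2 * v ^ 2) * (s0 * s0) = (v - v0) ^ 2 * c * g * C ^ 2).
  { rewrite HTs, HD0. unfold a, c. ring. }
  assert (HT2 : c * (v + 1) ^ 2 - g * C ^ 2 * v ^ 2 <= T * T).
  { apply Rmult_le_reg_r with (s0 * s0); [nra|].
    assert (0 <= (v - v0) ^ 2 * c * g * C ^ 2) by (apply Rmult_le_pos; [apply Rmult_le_pos; [apply Rmult_le_pos|]|]; first [apply pow2_ge_0 | lra]).
    assert ((T * s0) * (T * s0) = T * T * (s0 * s0)) by ring. lra. }
  assert (Hs2 : T * T <= (s + v + 1) * (s + v + 1)) by (apply Rmult_le_compat; lra).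
  unfold c in *. nra.
Qed.


Lemma exp_pow x n : exp x ^ n = exp (INR n * x).
Proof.
  induction n.
  - simpl. rewrite Rmult_0_l, exp_0. auto.
  - rewrite S_INR. simpl pow. rewrite IHn, <- exp_plus. f_equal. ring.
Qed.

Lemma sumN_ext f g N : (forall i, (i < N)%nat -> f i = g i) -> sumN f N = sumN g N.
Proof. induction N; simpl; intros H; auto. rewrite IHN, H; auto. Qed.

Lemma sumN_scal c f N : sumN (fun i => c * f i) N = c * sumN f N.
Proof. induction N; simpl; [ring|rewrite IHN; ring]. Qed.

Lemma geom q N : sumN (fun i => q ^ i) N * (1 - q) = 1 - q ^ N.
Proof. induction N; simpl; [ring|]. rewrite Rmult_plus_distr_r, IHN. ring. Qed.

Lemma sumN_nonneg f N : (forall i, 0 <= f i) -> 0 <= sumN f N.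
Proof. induction N; simpl; intros H; [lra|]. specialize (IHN H). specialize (H N). lra. Qed.

Lemma exp_diff_mul a1 a2 a3 : (exp a1 - exp a2) * exp a3 = exp (a1 + a3) - exp (a2 + a3).
Proof. rewrite !exp_plus. ring. Qed.

Lemma sumG (m al be : R) (n : nat) : 0 < m -> 0 <= be -> 1 <= INR n ->
  sumN (fun i => (exp (- (INR i * / INR n) / m) - exp (- (INR (S i) * / INR n) / m)) *
                 exp (- (al + be * (INR (S i) * / INR n)))) (n * n)
  >= exp (- al) / (1 + be * m) * (1 - (be + m + / m) / INR n).
Proof.
  intros Hm Hbe Hn.
  set (h := / INR n).
  assert (Hh : INR n * h = 1) by (unfold h; field; intro; lra).
  assert (Hh0 : 0 < h) by (unfold h; apply Rinv_0_lt_compat; lra).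
  set (L := - h / m - be * h).
  set (K0 := exp (- al - be * h) - exp (- al - be * h - h / m)).
  assert (Hterm : forall i, (exp (- (INR i * h) / m) - exp (- (INR (S i) * h) / m)) *
                 exp (- (al + be * (INR (S i) * h))) = K0 * exp L ^ i).
  { intro i. rewrite exp_pow. unfold K0. rewrite exp_diff_mul, Rmult_comm, exp_diff_mul.
    rewrite S_INR. unfold L. f_equal; f_equal; field; intro; lra. }
  rewrite (sumN_ext _ (fun i => K0 * exp L ^ i)) by (intros; apply Hterm).
  rewrite sumN_scal.
  set (q := exp L). set (G := sumN (fun i => q ^ i) (n * n)).
  pose proof (geom q (n * n)) as HG. fold G in HG.
  assert (HQ : q ^ (n * n) = exp (- (INR n * (/ m + be)))).
  { unfold q. rewrite exp_pow, mult_INR. f_equal. unfold L.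
    replace (INR n * INR n * (- h / m - be * h)) with (- (INR n * h) * (INR n * (/ m + be))) by (field; repeat split; intro; lra).
    rewrite Hh. ring. }
  set (Q := q ^ (n * n)) in *.
  set (c := / m + be).
  assert (Hc : m * c = 1 + be * m) by (unfold c; field; intro; lra).
  assert (Hcm : / m <= c) by (unfold c; lra).
  assert (Hmi : 0 < / m) by (apply Rinv_0_lt_compat; auto).
  set (e := exp (- h / m)). set (f := exp (- (be * h))).
  assert (Hq : q = e * f) by (unfold q, e, f, L; rewrite <- exp_plus; f_equal; ring).
  assert (HK : K0 = exp (- al) * f * (1 - e)).
  { unfold K0, e, f. replace (- al - be * h - h / m) with (- al + - (be * h) + - h / m) by (unfold Rdiv; ring).
    replace (- al - be * h) with (- al + - (be * h)) by ring. rewrite !exp_plus. ring. }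
  assert (He : e * (1 + h / m) <= 1).
  { unfold e. pose proof (exp_ineq1_le (h / m)).
    assert (exp (- h / m) * exp (h / m) = 1) by (rewrite <- exp_plus; replace (- h / m + h / m) with 0 by (field; intro; lra); apply exp_0).
    assert (0 < exp (- h / m)) by apply exp_pos. nra. }
  assert (He0 : 0 < e) by apply exp_pos.
  assert (Hf1 : 1 - be * h <= f) by (unfold f; pose proof (exp_ineq1_le (- (be * h))); lra).
  assert (Hf0 : 0 < f) by apply exp_pos.
  assert (Hfle : f <= 1).
  { unfold f. pose proof (exp_ineq1_le (be * h)).
    assert (exp (- (be * h)) * exp (be * h) = 1) by (rewrite <- exp_plus; replace (- (be * h) + be * h) with 0 by ring; apply exp_0).
    assert (0 < exp (- (be * h))) by apply exp_pos. assert (0 <= be * h) by nra. nra. }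
  assert (Hq1 : 1 - h * c <= q) by (unfold q; pose proof (exp_ineq1_le L); unfold L, c in *; unfold Rdiv in *; nra).
  assert (Hqlt : q < 1).
  { unfold q. rewrite <- exp_0. apply exp_increasing. unfold L. unfold Rdiv.
    assert (0 < h * / m) by (apply Rmult_lt_0_compat; auto). nra. }
  assert (HQ0 : 0 < Q) by (rewrite HQ; apply exp_pos).
  assert (HQ1 : Q <= 1).
  { rewrite HQ, <- exp_0. assert (0 <= INR n * (/ m + be)) by (apply Rmult_le_pos; lra).
    destruct (Req_dec (INR n * (/ m + be)) 0) as [Hz|Hz]; [rewrite Hz, Ropp_0; lra|].
    left; apply exp_increasing; lra. }
  assert (HQb : Q <= m * h).
  { rewrite HQ. pose proof (exp_ineq1_le (INR n * (/ m + be))).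
    assert (exp (- (INR n * (/ m + be))) * exp (INR n * (/ m + be)) = 1)
      by (rewrite <- exp_plus; replace (- (INR n * (/ m + be)) + INR n * (/ m + be)) with 0 by ring; apply exp_0).
    set (E1 := exp (- (INR n * (/ m + be)))) in *. set (E2 := exp (INR n * (/ m + be))) in *.
    assert (HE1 : 0 < E1) by apply exp_pos.
    assert (Hn1 : INR n * / m <= INR n * (/ m + be)) by nra.
    assert (Hmm : m * / m = 1) by (field; repeat split; intro; lra).
    (* E1 * E2 = 1, E2 >= n/m, so E1 <= m/n = m h *)
    assert (E1 * (INR n * / m) <= 1) by nra.
    assert (HE3 : E1 * (INR n * / m) * (m * h) = E1).
    { replace (E1 * (INR n * / m) * (m * h)) with (E1 * (INR n * h) * (m * / m)) by ring. rewrite Hh, Hmm. ring. }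
    assert (Hmh : 0 < m * h) by (apply Rmult_lt_0_compat; auto).
    rewrite <- HE3. rewrite <- (Rmult_1_l (m * h)) at 2. apply Rmult_le_compat_r; lra. }
  assert (HG0 : 0 <= G) by (unfold G; apply sumN_nonneg; intro; apply pow_le; unfold q; left; apply exp_pos).
  assert (Hy2 : (1 - h / m) * (1 - q) <= (1 - e) * (m * c)).
  { assert (Hhm : 0 < h / m) by (unfold Rdiv; apply Rmult_lt_0_compat; auto).
    assert (Hmc : m * c * (h / m) = h * c) by (field; repeat split; intro; lra).
    assert (E3 : (1 - e) * (1 + h / m) >= h / m) by nra.
    (* (1-e) m c (1+h/m) >= h c >= (1-q) *)
    assert (E4 : (1 - e) * (m * c) * (1 + h / m) >= 1 - q) by nra.
    destruct (Rle_or_lt (h / m) 1) as [Hx|Hx].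
    -
      assert (E5 : (1 - h / m) * (1 - q) * (1 + h / m) <= (1 - q)) by nra.
      assert (E6 : 0 <= (1 - e) * (m * c)) by (assert (0 < m * c) by nra; nra).
      nra.
    - assert (0 <= (1 - e) * (m * c)) by (assert (0 < m * c) by nra; nra). nra. }
  assert (Hz : 1 - (be + m) * h <= f * (1 - Q)) by nra.
  assert (Hz1 : f * (1 - Q) <= 1) by nra.
  assert (HX : f * (1 - e) * G * (m * c) >= 1 - (be + m + / m) * h).
  { assert (f * (1 - e) * G * (m * c) >= f * ((1 - h / m) * (1 - q)) * G).
    { replace (f * (1 - e) * G * (m * c)) with (f * G * ((1 - e) * (m * c))) by ring.
      replace (f * ((1 - h / m) * (1 - q)) * G) with (f * G * ((1 - h / m) * (1 - q))) by ring.
      apply Rle_ge, Rmult_le_compat_l; auto. apply Rmult_le_pos; lra. }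
    replace (f * ((1 - h / m) * (1 - q)) * G) with (f * (1 - Q) * (1 - h / m)) in H by (rewrite <- HG; ring).
    assert (f * (1 - Q) * (1 - h / m) >= f * (1 - Q) - h / m).
    { assert (0 <= f * (1 - Q)) by nra. assert (0 <= h / m) by (unfold Rdiv; nra). nra. }
    unfold Rdiv in *. lra. }
  rewrite HK. rewrite <- Hc.
  replace ((be + m + / m) / INR n) with ((be + m + / m) * h) by (unfold h; field; split; intro; lra).
  assert (Hmc0 : 0 < m * c) by nra.
  pose proof (exp_pos (- al)) as Hea.
  apply Rle_ge.
  replace (exp (- al) / (m * c) * (1 - (be + m + / m) * h)) with (exp (- al) * ((1 - (be + m + / m) * h) / (m * c))) by (field; repeat split; intro; lra).
  replace (exp (- al) * f * (1 - e) * G) with (exp (- al) * (f * (1 - e) * G)) by ring.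
  apply Rmult_le_compat_l; [lra|].
  apply Rmult_le_reg_r with (m * c); auto.
  replace ((1 - (be + m + / m) * h) / (m * c) * (m * c)) with (1 - (be + m + / m) * h) by (field; repeat split; intro; lra).
  lra.
Qed.


Definition sr_s0 g C v0 := (v0 + 1) * sqrt (1 + g * (1 - (v0 / (v0 + 1) * C) ^ 2)).
Definition sr_A g C v0 := (1 + g) * (v0 + 1) / sr_s0 g C v0 - 1.
Definition sr_B g C v0 := ((1 + g - g * C ^ 2) * v0 + (1 + g)) / sr_s0 g C v0 - 1.

Lemma sr_key' (g C v0 v s : R) : 0 < g -> 0 <= C < 1 -> 0 < v0 -> 0 <= v ->
  0 <= sr_A g C v0 /\ 0 <= sr_B g C v0 /\ sr_A g C v0 + sr_B g C v0 * v0 = sr_s0 g C v0 - v0 - 1 /\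
  (sr_A g C v0 + sr_B g C v0 * v <= s -> (1 + g) * ((v + 1) ^ 2 - (v * C) ^ 2) <= (s + v + 1) ^ 2 - (v * C) ^ 2).
Proof. intros. exact (sr_key g C v0 v s H H0 H1 H2). Qed.

Lemma interval_disj (h x : R) (i k : nat) : 0 < h -> i <> k ->
  Iv (Some (INR i * h)) (Some (INR (S i) * h)) x -> Iv (Some (INR k * h)) (Some (INR (S k) * h)) x -> False.
Proof.
  intros Hh Hik [H1 H2] [H3 H4]. unfold Lo, Qo in *.
  destruct (Nat.lt_ge_cases i k) as [Hl|Hl].
  - assert (INR (S i) <= INR k) by (apply le_INR; lia).
    assert (INR (S i) * h <= INR k * h) by (apply Rmult_le_compat_r; lra). lra.
  - assert (INR (S k) <= INR i) by (apply le_INR; lia).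
    assert (INR (S k) * h <= INR i * h) by (apply Rmult_le_compat_r; lra). lra.
Qed.

Lemma sumN_scal_r c f N : sumN (fun i => f i * c) N = sumN f N * c.
Proof. induction N; simpl; [ring|rewrite IHN; ring]. Qed.

Lemma Rmin_ge a b r : r <= a -> r <= b -> ~ Rmin a b < r.
Proof. intros. unfold Rmin. destruct (Rle_dec a b); lra. Qed.

Lemma main_n (Sp : prob_space) (Ps pisr pirr pird pisd : R)
  (gsr grr grd gsd : Sp -> R)
  (hPs : 0 < Ps) (hsr : 0 < pisr) (hrr : 0 < pirr) (hrd : 0 < pird) (hsd : 0 < pisd)
  (Hsr : exponential_rv Sp pisr gsr) (Hrr : exponential_rv Sp pirr grr)
  (Hrd : exponential_rv Sp pird grd) (Hsd : exponential_rv Sp pisd gsd)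
  (Hind : mutually_independent4 Sp gsr grr grd gsd)
  (r Pr Cx : R) (Hr : 0 < r) (HPr : 0 < Pr) (HC : 0 <= Cx < 1) (n : nat) (Hn : 1 <= INR n) :
  let g := gammar r in let v0 := Pr * pirr in
  let A := sr_A g Cx v0 in let B := sr_B g Cx v0 in
  let k := Psi r Cx / (1 - Cx ^ 2) in
  let al1 := A / (Ps * pisr) in let be1 := B * Pr / (Ps * pisr) in
  let al2 := k / (Pr * pird) in let be2 := Ps * al2 in
  let h := / INR n in
  P_EE Sp Ps Pr Cx r gsr grr grd gsd <=
  1 - sumN (fun i => (exp (- (INR i * h) / pirr) - exp (- (INR (S i) * h) / pirr)) *
                    exp (- (al1 + be1 * (INR (S i) * h)))) (n * n) *
      sumN (fun j => (exp (- (INR j * h) / pisd) - exp (- (INR (S j) * h) / pisd)) *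
                    exp (- (al2 + be2 * (INR (S j) * h)))) (n * n).
Proof.
  intros g v0 A B k al1 be1 al2 be2 h.
  assert (Hh : 0 < h) by (unfold h; apply Rinv_0_lt_compat; lra).
  assert (Hg : 0 < g) by (apply gammar_pos; auto).
  assert (Hv0 : 0 < v0) by (unfold v0; nra).
  destruct (sr_key' g Cx v0 0 0 Hg HC Hv0 (Rle_refl 0)) as (HA & HB & _ & _).
  change (0 <= A) in HA. change (0 <= B) in HB.
  assert (He : 0 < 1 - Cx ^ 2) by nra.
  assert (Hk : 0 <= k).
  { unfold k, Psi. apply div_nonneg; auto.
    assert (1 <= sqrt (1 + gammar r * (1 - Cx ^ 2))).
    { apply Rle_trans with (sqrt 1); [rewrite sqrt_1; lra|apply sqrt_le_1_alt]. fold g. nra. }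
    lra. }
  set (th := fun i : nat => (A + B * Pr * (INR (S i) * h)) / Ps).
  set (ph := fun j : nat => (Ps * (INR (S j) * h) + 1) * k / Pr).
  assert (Hth : forall i, 0 <= th i).
  { intro i. unfold th. apply div_nonneg; auto. pose proof (pos_INR (S i)).
    assert (0 <= INR (S i) * h) by nra. assert (0 <= B * Pr) by nra.
    assert (0 <= B * Pr * (INR (S i) * h)) by (apply Rmult_le_pos; auto). lra. }
  assert (Hph : forall j, 0 <= ph j).
  { intro j. unfold ph. apply div_nonneg; auto. pose proof (pos_INR (S j)).
    assert (0 <= INR (S j) * h) by nra. assert (0 <= Ps * (INR (S j) * h)) by nra.
    apply Rmult_le_pos; lra. }
  set (bx := fun (i j : nat) (w : Sp) =>
     Iv (Some (th i)) None (gsr w) /\ Iv (Some (INR i * h)) (Some (INR (S i) * h)) (grr w) /\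
     Iv (Some (ph j)) None (grd w) /\ Iv (Some (INR j * h)) (Some (INR (S j) * h)) (gsd w)).
  assert (Hbm : forall i j, ps_meas Sp (bx i j)).
  { intros i j. unfold bx. apply meas_and; [|apply meas_and; [|apply meas_and]]; eapply meas_Iv; eauto. }
  set (p := fun i : nat => (exp (- (INR i * h) / pirr) - exp (- (INR (S i) * h) / pirr)) *
                    exp (- (al1 + be1 * (INR (S i) * h)))).
  set (q := fun j : nat => (exp (- (INR j * h) / pisd) - exp (- (INR (S j) * h) / pisd)) *
                    exp (- (al2 + be2 * (INR (S j) * h)))).
  fold (sumN p (n * n)) (sumN q (n * n)).
  assert (Hs : setup Sp pisr pirr pird pisd gsr grr grd gsd) by (unfold setup; tauto).
  assert (Hbp : forall i j, ps_P Sp (bx i j) = p i * q j).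
  { intros i j. unfold bx.
    rewrite (box_all Sp pisr pirr pird pisd gsr grr grd gsd Hs); unfold okb, Qo; auto;
      try (apply Rmult_le_compat_r; [lra|]; rewrite S_INR; lra).
    unfold Fo, FLo.
    pose proof (pos_INR i) as Hi. pose proof (pos_INR j) as Hj.
    rewrite (exp_cdf Sp pisr gsr Hsr (th i) (Hth i)).
    rewrite (exp_cdf Sp pird grd Hrd (ph j) (Hph j)).
    rewrite (exp_cdf Sp pirr grr Hrr) by (rewrite ?S_INR; nra).
    rewrite (exp_cdf Sp pirr grr Hrr) by (rewrite ?S_INR; nra).
    rewrite (exp_cdf Sp pisd gsd Hsd) by (rewrite ?S_INR; nra).
    rewrite (exp_cdf Sp pisd gsd Hsd) by (rewrite ?S_INR; nra).
    replace (- th i / pisr) with (- (al1 + be1 * (INR (S i) * h))).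
    2:{ unfold th, al1, be1. cbv beta. field. split; lra. }
    replace (- ph j / pird) with (- (al2 + be2 * (INR (S j) * h))).
    2:{ unfold ph, be2, al2. cbv beta. field. repeat split; lra. }
    unfold p, q. ring. }
  set (U := fun w => exists i, (i < n * n)%nat /\ (exists j, (j < n * n)%nat /\ bx i j w)).
  assert (HUm : ps_meas Sp U).
  { apply meas_union_lt. intro i. apply meas_union_lt. auto. }
  assert (HPU : ps_P Sp U = sumN p (n * n) * sumN q (n * n)).
  { unfold U. rewrite P_union_lt.
    - rewrite <- sumN_scal_r. apply sumN_ext. intros i _.
      rewrite P_union_lt; auto.
      + rewrite <- sumN_scal. apply sumN_ext. intros j _. apply Hbp.
      + intros j1 j2 w Hne H1 H2. unfold bx in H1, H2.
        eapply (interval_disj h (gsd w) j1 j2); eauto; tauto.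
    - intro i. apply meas_union_lt; auto.
    - intros i1 i2 w Hne [j1 [_ H1]] [j2 [_ H2]]. unfold bx in H1, H2.
      eapply (interval_disj h (grr w) i1 i2); eauto; tauto. }
  rewrite <- HPU, <- P_compl by auto.
  assert (Hmf : forall m X, exponential_rv Sp m X -> mf Sp X) by (intros m X HX t; apply (rv_meas Sp m X HX)).
  apply P_mono; auto.
  { apply meas_bad; eapply Hmf; eauto. }
  { apply meas_not; auto. }
  intros w Hbad HU. refine (Rmin_ge _ _ r _ _ Hbad). all: clear Hbad.
  all: destruct HU as [i [_ [j [_ Hb]]]]; unfold bx, Iv, Lo, Qo in Hb.
  all: destruct Hb as [[H1 _] [[H2 H3] [[H4 _] [H5 H6]]]].
  all: pose proof (pos_INR i) as Hi; pose proof (pos_INR j) as Hj.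
  all: assert (Hih : 0 <= INR i * h) by (apply Rmult_le_pos; lra).
  all: assert (Hjh : 0 <= INR j * h) by (apply Rmult_le_pos; lra).
  -
    set (v := Pr * grr w). set (s := Ps * gsr w).
    assert (Hv : 0 <= v) by (unfold v; apply Rmult_le_pos; lra).
    destruct (sr_key' g Cx v0 v s Hg HC Hv0 Hv) as (_ & _ & _ & Hkey). fold A B in Hkey.
    assert (Hs1 : A + B * v <= s).
    { unfold s. unfold th in H1. cbv beta in H1.
      assert (Ps * ((A + B * Pr * (INR (S i) * h)) / Ps) = A + B * Pr * (INR (S i) * h)) by (field; lra).
      assert (v <= Pr * (INR (S i) * h)) by (unfold v; nra).
      assert (B * v <= B * (Pr * (INR (S i) * h))) by nra. nra. }
    specialize (Hkey Hs1).
    unfold R_sr. apply log_step; [|fold g; unfold v, s in Hkey; lra].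
    assert (v * Cx < v + 1) by nra. unfold v in *. nra.
  -
    set (u := Pr * grd w). set (x := Ps * gsd w + 1).
    assert (Hx : 0 < x) by (unfold x; assert (0 <= Ps * gsd w) by (apply Rmult_le_pos; lra); lra).
    assert (Hu : x * ((sqrt (1 + g * (1 - Cx ^ 2)) - 1) / (1 - Cx ^ 2)) <= u).
    { change ((sqrt (1 + g * (1 - Cx ^ 2)) - 1) / (1 - Cx ^ 2)) with k. unfold u, x. unfold ph in H4.
      assert (Pr * ((Ps * (INR (S j) * h) + 1) * k / Pr) = (Ps * (INR (S j) * h) + 1) * k) by (field; lra).
      assert (Ps * gsd w <= Ps * (INR (S j) * h)) by nra.
      assert ((Ps * gsd w + 1) * k <= (Ps * (INR (S j) * h) + 1) * k) by nra.
      cbv beta in H4.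
      assert (Pr * ((Ps * (INR (S j) * h) + 1) * k / Pr) < Pr * grd w) by (apply Rmult_lt_compat_l; lra).
      lra. }
    pose proof (rd_key g Cx u x (Rlt_le _ _ Hg) HC Hx Hu) as Hkey.
    unfold R_rd. apply log_step; [apply pow_lt; auto|].
    fold g. unfold u, x in Hkey.
    replace (Pr * grd w + Ps * gsd w + 1) with (Pr * grd w + (Ps * gsd w + 1)) by ring. lra.
Qed.


Theorem theorem4 (S : prob_space) (Ps pisr pirr pird pisd : R)
  (gsr grr grd gsd : S -> R)
  (hPs : 0 < Ps) (hsr : 0 < pisr) (hrr : 0 < pirr) (hrd : 0 < pird) (hsd : 0 < pisd)
  (Hsr : exponential_rv S pisr gsr) (Hrr : exponential_rv S pirr grr)
  (Hrd : exponential_rv S pird grd) (Hsd : exponential_rv S pisd gsd)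
  (Hind : mutually_independent4 S gsr grr grd gsd) :
  forall (r Pr Cx : R), 0 < r -> 0 < Pr -> 0 <= Cx < 1 ->
    P_EE S Ps Pr Cx r gsr grr grd gsd <= P_UB_RF Ps Pr Cx r pisr pirr pird pisd.
Proof.
  intros r Pr Cx Hr HPr HC.
  pose proof (main_n S Ps pisr pirr pird pisd gsr grr grd gsd hPs hsr hrr hrd hsd Hsr Hrr Hrd Hsd Hind r Pr Cx Hr HPr HC) as Hmain.
  cbv zeta in Hmain.
  set (g := gammar r) in *. set (v0 := Pr * pirr) in *.
  set (A := sr_A g Cx v0) in *. set (B := sr_B g Cx v0) in *.
  set (k := Psi r Cx / (1 - Cx ^ 2)) in *.
  set (al1 := A / (Ps * pisr)) in *. set (be1 := B * Pr / (Ps * pisr)) in *.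
  set (al2 := k / (Pr * pird)) in *. set (be2 := Ps * al2) in *.
  assert (Hg : 0 < g) by (apply gammar_pos; auto).
  assert (Hv0 : 0 < v0) by (unfold v0; nra).
  destruct (sr_key' g Cx v0 0 0 Hg HC Hv0 (Rle_refl 0)) as (HA & HB & HAB & _).
  change (0 <= A) in HA. change (0 <= B) in HB. change (A + B * v0 = sr_s0 g Cx v0 - v0 - 1) in HAB.
  assert (He : 0 < 1 - Cx ^ 2) by nra.
  assert (Hk : 0 <= k).
  { unfold k, Psi. apply div_nonneg; auto.
    assert (1 <= sqrt (1 + gammar r * (1 - Cx ^ 2))).
    { apply Rle_trans with (sqrt 1); [rewrite sqrt_1; lra|apply sqrt_le_1_alt]. fold g. nra. }
    lra. }
  assert (Hbe1 : 0 <= be1) by (unfold be1; apply div_nonneg; [nra|nra]).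
  assert (Hal2 : 0 <= al2) by (unfold al2; apply div_nonneg; [lra|nra]).
  assert (Hbe2 : 0 <= be2) by (unfold be2; nra).
  set (K1 := exp (- al1) / (1 + be1 * pirr)).
  set (K2 := exp (- al2) / (1 + be2 * pisd)).
  set (D1 := be1 + pirr + / pirr). set (D2 := be2 + pisd + / pisd).
  assert (HK1 : 0 < K1) by (unfold K1; apply Rdiv_lt_0_compat; [apply exp_pos|nra]).
  assert (HK2 : 0 < K2) by (unfold K2; apply Rdiv_lt_0_compat; [apply exp_pos|nra]).
  assert (HD1 : 0 <= D1) by (unfold D1; assert (0 < / pirr) by (apply Rinv_0_lt_compat; auto); lra).
  assert (HD2 : 0 <= D2) by (unfold D2; assert (0 < / pisd) by (apply Rinv_0_lt_compat; auto); lra).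
  assert (Hstep : P_EE S Ps Pr Cx r gsr grr grd gsd <= 1 - K1 * K2).
  { apply Rnot_lt_le. intro Hc.
    set (eps := P_EE S Ps Pr Cx r gsr grr grd gsd - (1 - K1 * K2)).
    assert (Heps : 0 < eps) by (unfold eps; lra).
    destruct (INR_unbounded (1 + D1 + D2 + K1 * K2 * (D1 + D2) / eps)) as [n Hn].
    assert (Hq : 0 <= K1 * K2 * (D1 + D2) / eps) by (apply div_nonneg; [apply Rmult_le_pos; nra|lra]).
    assert (Hn1 : 1 <= INR n) by lra.
    specialize (Hmain n Hn1).
    pose proof (sumG pirr al1 be1 n hrr Hbe1 Hn1) as S1.
    pose proof (sumG pisd al2 be2 n hsd Hbe2 Hn1) as S2.
    fold K1 D1 in S1. fold K2 D2 in S2.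
    set (SP := sumN _ (n * n)) in S1. set (SQ := sumN _ (n * n)) in S2.
    change (P_EE S Ps Pr Cx r gsr grr grd gsd <= 1 - SP * SQ) in Hmain.
    set (t1 := 1 - D1 / INR n) in *. set (t2 := 1 - D2 / INR n) in *.
    assert (Hnp : 0 < INR n) by lra.
    assert (Ht1 : 0 <= t1 <= 1).
    { unfold t1. split; [|assert (0 <= D1 / INR n) by (apply div_nonneg; lra); lra].
      assert (D1 / INR n <= 1); [|lra]. apply Rmult_le_reg_r with (INR n); auto.
      unfold Rdiv. rewrite Rmult_assoc, Rinv_l by lra. lra. }
    assert (Ht2 : 0 <= t2 <= 1).
    { unfold t2. split; [|assert (0 <= D2 / INR n) by (apply div_nonneg; lra); lra].
      assert (D2 / INR n <= 1); [|lra]. apply Rmult_le_reg_r with (INR n); auto.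
      unfold Rdiv. rewrite Rmult_assoc, Rinv_l by lra. lra. }
    assert (HSQ : 0 <= SQ) by nra.
    assert (HPQ : K1 * K2 * (t1 + t2 - 1) <= SP * SQ).
    { assert (K1 * t1 * SQ <= SP * SQ) by (apply Rmult_le_compat_r; lra).
      assert (K1 * t1 * (K2 * t2) <= K1 * t1 * SQ) by (apply Rmult_le_compat_l; nra).
      assert (t1 * t2 >= t1 + t2 - 1) by nra.
      assert (K1 * K2 * (t1 + t2 - 1) <= K1 * K2 * (t1 * t2)) by (apply Rmult_le_compat_l; nra).
      nra. }
    assert (Hsmall : K1 * K2 * ((D1 + D2) / INR n) < eps).
    { assert (K1 * K2 * (D1 + D2) / eps < INR n) by lra.
      apply Rmult_lt_reg_r with (INR n / eps). apply Rdiv_lt_0_compat; lra.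
      replace (K1 * K2 * ((D1 + D2) / INR n) * (INR n / eps)) with (K1 * K2 * (D1 + D2) / eps) by (field; repeat split; intro; lra).
      replace (eps * (INR n / eps)) with (INR n) by (field; repeat split; intro; lra). lra. }
    unfold t1, t2 in HPQ.
    replace (K1 * K2 * (1 - D1 / INR n + (1 - D2 / INR n) - 1)) with (K1 * K2 - K1 * K2 * ((D1 + D2) / INR n)) in HPQ by (field; repeat split; intro; lra).
    unfold eps in Hsmall. lra. }
  apply Rle_trans with (1 - K1 * K2); auto.
  unfold P_UB_RF. cbv zeta.
  set (a := Psi r Cx / (Pr * pird * (1 - Cx ^ 2))).
  set (Gt := (Pr * pirr + 1) / (Ps * pisr) * Psi r (alpha Pr pirr * Cx)).
  assert (Hal2a : al2 = a) by (unfold al2, a, k; field; lra).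
  assert (HK2e : K2 = exp (- a) / (Ps * pisd * a + 1)).
  { unfold K2, be2. rewrite Hal2a. f_equal. ring. }
  assert (HGt : al1 + be1 * pirr = Gt).
  { unfold al1, be1, Gt.
    replace (A / (Ps * pisr) + B * Pr / (Ps * pisr) * pirr) with ((A + B * v0) / (Ps * pisr)) by (unfold v0; field; lra).
    rewrite HAB. unfold sr_s0, Psi, alpha. fold g. fold v0. unfold Rdiv. ring. }
  assert (HK1e : exp (- Gt) <= K1).
  { unfold K1. rewrite <- HGt.
    assert (Hx : 0 <= be1 * pirr) by nra.
    pose proof (exp_ineq1_le (be1 * pirr)).
    rewrite Ropp_plus_distr, exp_plus.
    assert (Hm : exp (- (be1 * pirr)) * exp (be1 * pirr) = 1) by (rewrite <- exp_plus; replace (- (be1 * pirr) + be1 * pirr) with 0 by ring; apply exp_0).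
    assert (exp (- (be1 * pirr)) <= / (1 + be1 * pirr)).
    { apply Rmult_le_reg_r with (1 + be1 * pirr); [lra|]. rewrite Rinv_l by lra.
      pose proof (exp_pos (- (be1 * pirr))). nra. }
    unfold Rdiv. apply Rmult_le_compat_l; [left; apply exp_pos|auto]. }
  rewrite HK2e.
  assert (Hden : 0 < Ps * pisd * a + 1) by (assert (0 <= a) by (rewrite <- Hal2a; auto); assert (0 <= Ps * pisd * a) by (apply Rmult_le_pos; [nra|auto]); lra).
  assert (exp (- (a + Gt)) / (Ps * pisd * a + 1) <= K1 * (exp (- a) / (Ps * pisd * a + 1))); [|lra].
  rewrite Ropp_plus_distr, exp_plus. unfold Rdiv.
  replace (K1 * (exp (- a) * / (Ps * pisd * a + 1))) with (exp (- a) * / (Ps * pisd * a + 1) * K1) by ring.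
  replace (exp (- a) * exp (- Gt) * / (Ps * pisd * a + 1)) with (exp (- a) * / (Ps * pisd * a + 1) * exp (- Gt)) by ring.
  apply Rmult_le_compat_l; auto.
  apply Rmult_le_pos; [left; apply exp_pos|left; apply Rinv_0_lt_compat; auto].
Qed.
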